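(* Let $X$ be a normal topological space, and let $f,g\colon X\to Y$ and $f',g'\colon Y\to Z$ be continuous maps. Then $\mathrm{D}(f'\circ f,g'\circ g)\leq \mathrm{D}(f,g)+\mathrm{D}(f',g')$.
   Context: For continuous maps $f,g\colon X\to Y$, the homotopic distance $\mathrm{D}(f,g)$ is the least integer $n\geq 0$ such that there is an open cover $\{U_0,\dots,U_n\}$ of $X$ with $f|_{U_j}\simeq g|_{U_j}$ for all $j$; if no such cover exists, $\mathrm{D}(f,g)=\infty$. *)

(* Defs.v *)
From HB Require Import structures.
From mathcomp Require Import all_boot all_order all_algebra.
From mathcomp Require Import all_classical all_reals all_analysis.
From mathcomp Require Import Rstruct Rstruct_topology.


Set Implicit Arguments.
Unset Strict Implicit.
Unset Printing Implicit Defensive.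

Import Order.TTheory GRing.Theory Num.Theory.
Local Open Scope classical_set_scope.
Local Open Scope ring_scope.

(* [f|_U ~ g|_U]: there is a homotopy H : U x [0,1] -> Y, i.e. a map
   continuous on the subspace U x [0,1] of X x R, with H(x,0) = f x and
   H(x,1) = g x for x in U. *)
Definition homotopic_on {X Y : topologicalType} (U : set X) (f g : X -> Y) :=
  exists H : X * Rdefinitions.R -> Y,
    {within U `*` `[0%R, 1%R], continuous H} /\
    (forall x, U x -> H (x, 0%R) = f x) /\
    (forall x, U x -> H (x, 1%R) = g x).

Definition hdist_le {X Y : topologicalType} (f g : X -> Y) (n : nat) :=
  exists U : nat -> set X,
    (forall j : nat, (j <= n)%N -> open (U j)) /\
    (forall x : X, exists2 j : nat, (j <= n)%N & U j x) /\
    (forall j : nat, (j <= n)%N -> homotopic_on (U j) f g).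

(* Homotopic distance D(f,g) as an extended real: the least such n,
   or +oo if no such cover exists (inf of the empty set is +oo). *)
Definition hdist {X Y : topologicalType} (f g : X -> Y) : \bar Rdefinitions.R :=
  ereal_inf [set (n%:R)%:E | n in [set n | hdist_le f g n]].

(* Main.v *)
Require Import Defs.
From HB Require Import structures.
From mathcomp Require Import all_boot all_order all_algebra.
From mathcomp Require Import all_classical all_reals all_analysis.
From mathcomp Require Import Rstruct Rstruct_topology.
From mathcomp Require Import ring lra zify.

Set Implicit Arguments.
Unset Strict Implicit.
Unset Printing Implicit Defensive.
Import Order.TTheory GRing.Theory Num.Theory.
Local Open Scope classical_set_scope.


Section Helpers.
Local Open Scope ring_scope.

Definition cw {T U : topologicalType} (A : set T) (f : T -> U) :=
  forall x, A x -> forall N, nbhs (f x) N -> nbhs x [set y | A y -> N (f y)].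

Lemma cwP {T U : topologicalType} (A : set T) (f : T -> U) :
  {within A, continuous f} <-> cw A f.
Proof.
rewrite /from_subspace subspace_continuousP.
by split=> H x Ax N Nx; apply: (H x Ax N Nx).
Qed.

Lemma cw_cont {T U : topologicalType} (A : set T) (f : T -> U) :
  continuous f -> cw A f.
Proof.
move=> cf x Ax N Nx; have H : nbhs x (f @^-1` N) := cf x _ Nx.
by apply: filterS H => y Ny _.
Qed.

Lemma cw_sub {T U : topologicalType} (A B : set T) (f : T -> U) :
  A `<=` B -> cw B f -> cw A f.
Proof.
move=> AB cf x Ax N Nx; have := cf x (AB _ Ax) N Nx.
by apply: filterS => y H /AB; exact: H.
Qed.

Lemma cw_eq {T U : topologicalType} (A : set T) (f g : T -> U) :
  (forall x, A x -> f x = g x) -> cw A f -> cw A g.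
Proof.
move=> fg cf x Ax N; rewrite -fg // => Nx; have := cf x Ax N Nx.
by apply: filterS => y H Ay; rewrite -fg //; exact: H.
Qed.

Lemma cw_comp {T U V : topologicalType} (A : set T) (B : set U)
  (p : T -> U) (G : U -> V) :
  cw A p -> (forall x, A x -> B (p x)) -> cw B G -> cw A (G \o p).
Proof.
move=> cp AB cG x Ax N Nx; have := cG (p x) (AB _ Ax) N Nx => M.
have := cp x Ax _ M; apply: filterS => y H Ay; exact: (H Ay (AB _ Ay)).
Qed.

Lemma cw_paste {T U : topologicalType} (A C1 C2 : set T) (f : T -> U) :
  closed C1 -> closed C2 -> A `<=` C1 `|` C2 ->
  cw (A `&` C1) f -> cw (A `&` C2) f -> cw A f.
Proof.
move=> c1 c2 AC h1 h2 x Ax N Nx.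
have key : forall C, closed C -> cw (A `&` C) f ->
    nbhs x [set y | A y -> C y -> N (f y)].
  move=> C cC hC; have [Cx|nCx] := pselect (C x).
    by have := hC x (conj Ax Cx) N Nx; apply: filterS => y H Ay Cy; apply: H.
  have : open (~` C) by exact: closed_openC.
  move=> oC; have : nbhs x (~` C) by apply: open_nbhs_nbhs; split.
  by apply: filterS => y nCy _ Cy; exfalso; exact: nCy.
apply: filterS (filterI (key _ c1 h1) (key _ c2 h2)) => y [H1 H2] Ay.
by case: (AC _ Ay) => Cy; [exact: H1 | exact: H2].
Qed.

Lemma cw_loc {T U : topologicalType} (A : set T) (f : T -> U) :
  (forall x, A x -> exists O g, [/\ open O, O x, cw (A `&` O) g &
      forall y, A y -> O y -> f y = g y]) -> cw A f.
Proof.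
move=> H x Ax N; case: (H x Ax) => O [g [oO Ox cg fg]].
rewrite fg // => Nx; have := cg x (conj Ax Ox) N Nx.
have : nbhs x O by apply: open_nbhs_nbhs; split.
move=> nO /(filterI nO); apply: filterS => y [Oy Hy] Ay.
by rewrite fg //; exact: Hy.
Qed.

End Helpers.


Section Hom.
Local Open Scope ring_scope.
Notation RR := Rdefinitions.R.

Lemma snd_cont {X Y : topologicalType} : continuous (@snd X Y).
Proof. move=> q; exact: (@cvg_snd _ _ (nbhs q.1) (nbhs q.2) _). Qed.
Lemma fst_cont {X Y : topologicalType} : continuous (@fst X Y).
Proof. move=> q; exact: (@cvg_fst _ _ (nbhs q.1) (nbhs q.2) _). Qed.

Lemma pair_cont {X Y : topologicalType} (f : X -> Y) (h : RR -> RR) :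
  continuous f -> continuous h -> continuous (fun p : X * RR => (f p.1, h p.2)).
Proof.
move=> cf ch p; apply: (@cvg_pair _ _ _ _ (nbhs (f p.1)) (nbhs (h p.2)) _ _ _ (fun q : X * RR => f q.1) (fun q : X * RR => h q.2)).
  apply: (@continuous_comp _ _ _ fst f); last exact: cf.
  exact: cvg_fst.
apply: (@continuous_comp _ _ _ snd h); last exact: ch.
exact: cvg_snd.
Qed.

Lemma aff_cont (a b : RR) : continuous (fun t : RR => a * t + b).
Proof.
move=> t; apply: (@continuousD RR RR^o); last exact: cvg_cst.
apply: continuousM; [exact: cvg_cst | exact: cvg_id].
Qed.

Lemma hom_sub {X Y : topologicalType} (U W : set X) (f g : X -> Y) :
  W `<=` U -> homotopic_on U f g -> homotopic_on W f g.
Proof.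
move=> WU [H [cH [H0 H1]]]; exists H; split; last split.
- apply: continuous_subspaceW cH => -[x t] [/= Wx It]; split => //; exact: WU.
- by move=> x /WU; exact: H0.
- by move=> x /WU; exact: H1.
Qed.

Lemma hom_post {X Y Z : topologicalType} (U : set X) (f g : X -> Y) (h : Y -> Z) :
  continuous h -> homotopic_on U f g -> homotopic_on U (h \o f) (h \o g).
Proof.
move=> ch [H [cH [H0 H1]]]; exists (h \o H); split; last split.
- apply/cwP; apply: (cw_comp (B := setT)) => //; first exact/cwP.
  exact: cw_cont.
- by move=> x Ux /=; rewrite H0.
- by move=> x Ux /=; rewrite H1.
Qed.

Lemma hom_pre {X Y Z : topologicalType} (V : set Y) (f : X -> Y) (f' g' : Y -> Z) :
  continuous f -> homotopic_on V f' g' ->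
  homotopic_on (f @^-1` V) (f' \o f) (g' \o f).
Proof.
move=> cf [G [cG [G0 G1]]].
exists (G \o (fun p : X * RR => (f p.1, p.2))); split; last split.
- apply/cwP; apply: (@cw_comp _ _ _ _ (V `*` (`[0%R, 1%R] : set RR))).
  + apply: cw_cont; exact: (@pair_cont _ _ f (fun t => t) cf (fun t => cvg_id)).
  + by move=> -[x t] [/= Vx It].
  + exact/cwP.
- by move=> x Vx /=; rewrite G0.
- by move=> x Vx /=; rewrite G1.
Qed.


Lemma hom_trans {X Y : topologicalType} (U : set X) (f g h : X -> Y) :
  homotopic_on U f g -> homotopic_on U g h -> homotopic_on U f h.
Proof.
move=> [A [cA [A0 A1]]] [B [cB [B0 B1]]].
pose K := fun p : X * RR => if p.2 <= 2^-1 then A (p.1, 2 * p.2 + 0)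
                           else B (p.1, 2 * p.2 + -1).
exists K; split; last split.
- apply/cwP; apply: (@cw_paste _ _ _ [set p : X * RR | p.2 <= 2^-1]
                                     [set p : X * RR | 2^-1 <= p.2]).
  + have -> : [set p : X * RR | p.2 <= 2^-1] = snd @^-1` [set t : RR | t <= 2^-1] by [].
    apply: preimage_closed; last exact: closed_le.
    by move=> q _; exact: snd_cont.
  + have -> : [set p : X * RR | 2^-1 <= p.2] = snd @^-1` [set t : RR | 2^-1 <= t] by [].
    apply: preimage_closed; last exact: closed_ge.
    by move=> q _; exact: snd_cont.
  + move=> p _ /=; case: (lerP p.2 2^-1) => hp; [left | right] => //; exact: ltW.
  + apply: (@cw_eq _ _ _ (A \o (fun p : X * RR => (p.1, 2 * p.2 + 0)))).
      by move=> p [_ /= hp]; rewrite /K hp.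
    apply: (@cw_comp _ _ _ _ (U `*` (`[0%R, 1%R] : set RR))).
    * apply: cw_cont; exact: (@pair_cont _ _ (fun x => x) _ (fun x => cvg_id) (@aff_cont 2 0)).
    * move=> -[x t] [[/= Ux]]; rewrite /= !in_itv /= => /andP[t0 t1] ht.
      split => //=; apply/andP; split; lra.
    * exact/cwP.
  + apply: (@cw_eq _ _ _ (B \o (fun p : X * RR => (p.1, 2 * p.2 + -1)))).
      move=> p [[Up _] /= hp]; rewrite /K; case: ifPn => // hp'.
      have e : p.2 = 2^-1 by apply/eqP; rewrite eq_le hp hp'.
      rewrite /= e; have -> : 2 * 2^-1 + 0 = 1 :> RR by lra.
      have -> : 2 * 2^-1 + -1 = 0 :> RR by lra.
      by rewrite A1 // B0.
    apply: (@cw_comp _ _ _ _ (U `*` (`[0%R, 1%R] : set RR))).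
    * apply: cw_cont; exact: (@pair_cont _ _ (fun x => x) _ (fun x => cvg_id) (@aff_cont 2 (-1))).
    * move=> -[x t] [[/= Ux]]; rewrite /= !in_itv /= => /andP[t0 t1] ht.
      split => //=; apply/andP; split; lra.
    * exact/cwP.
- move=> x Ux; rewrite /K /=.
  have -> : (0 : RR) <= 2^-1 by lra.
  by rewrite mulr0 addr0 A0.
- move=> x Ux; rewrite /K /=.
  have -> : ((1 : RR) <= 2^-1) = false by apply/negbTE; rewrite -ltNge; lra.
  have -> : 2 * 1 + -1 = 1 :> RR by lra.
  by rewrite B1.
Qed.

Lemma hom_glue {X Y : topologicalType} (I : Type) (D : set I) (Q : I -> set X)
  (f g : X -> Y) :
  (forall a, D a -> open (Q a)) ->
  (forall a b x, D a -> D b -> Q a x -> Q b x -> a = b) ->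
  (forall a, D a -> homotopic_on (Q a) f g) ->
  homotopic_on (\bigcup_(a in D) Q a) f g.
Proof.
move=> oQ dQ hQ.
have HfE : forall a, exists H : X * RR -> Y, D a ->
    [/\ {within Q a `*` `[0%R, 1%R], continuous H},
        (forall x, Q a x -> H (x, 0%R) = f x) &
        (forall x, Q a x -> H (x, 1%R) = g x)].
  move=> a; have [Da|nDa] := pselect (D a).
    have [H [cH [H0 H1]]] := hQ a Da; by exists H.
  by exists (fun p => f p.1).
have [Hf HfP] := choice HfE.
have HHE' : forall p : X * RR, exists y : Y, (exists a, D a /\ Q a p.1) ->
     exists a, [/\ D a, Q a p.1 & y = Hf a p].
  move=> p; have [[a [Da Qa]]|nE] := pselect (exists a, D a /\ Q a p.1).
    by exists (Hf a p) => _; exists a.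
  by exists (f p.1) => E; exfalso; exact: nE.
have [HH HHP] := choice HHE'.
have HHE : forall p a, D a -> Q a p.1 -> HH p = Hf a p.
  move=> p a Da Qa; have [b [Db Qb ->]] := HHP p (ex_intro _ a (conj Da Qa)).
  by rewrite (dQ b a p.1).
exists HH; split; last split.
- apply/cwP; apply: cw_loc => -[x t] [[a Da Qax] It].
  exists (fst @^-1` Q a), (Hf a); split.
  + apply: open_comp; last exact: oQ.
    by move=> q _; exact: fst_cont.
  + exact: Qax.
  + apply: (@cw_sub _ _ _ (Q a `*` (`[0%R, 1%R] : set RR))).
      by move=> -[y s] [[_ Is] /= Qy].
    by have [/cwP] := HfP a Da.
  + by move=> -[y s] _ /= Qy; exact: HHE.
- move=> x [a Da Qa]; rewrite (HHE (x, _) a Da Qa).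
  by have [_ H0 _] := HfP a Da; rewrite H0.
- move=> x [a Da Qa]; rewrite (HHE (x, _) a Da Qa).
  by have [_ _ H1] := HfP a Da; rewrite H1.
Qed.

End Hom.


Section PU.
Local Open Scope ring_scope.
Notation RR := Rdefinitions.R.

Lemma pu_step {X : topologicalType} (nX : normal_space X) (U : nat -> set X) (n : nat) :
  (forall i, (i <= n)%N -> open (U i)) ->
  (forall x, exists2 i, (i <= n)%N & U i x) ->
  forall k, (k <= n.+1)%N ->
  exists phi : nat -> X -> RR, [/\ forall i, continuous (phi i),
    forall i x, 0 <= phi i x,
    forall i x, (i < k)%N -> 0 < phi i x -> U i x &
    forall x, (forall i, (i < k)%N -> phi i x = 0) ->
       exists i, [/\ (k <= i)%N, (i <= n)%N & U i x]].
Proof.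
move=> oU cU; elim=> [_|k IH kn].
  exists (fun _ _ => 0); split => //.
  - by move=> i x; exact: cvg_cst.
  - by move=> x _; have [i ni Ui] := cU x; exists i.
have [phi [cphi phi0 phiU phiI]] := IH (ltnW kn).
pose F := (\bigcap_(i in [set i | (i < k)%N]) (phi i @^-1` [set 0])) `&`
          ~` (\bigcup_(i in [set i | (k < i)%N /\ (i <= n)%N]) U i).
have cF : closed F.
  apply: closedI.
    apply: closed_bigI => i _; apply: preimage_closed; last exact: closed_eq.
    by move=> x _; exact: cphi.
  apply: open_closedC; apply: bigcup_open => i [_ ni]; exact: oU.
have cUk : closed (~` U k) by apply: open_closedC; apply: oU.
have dF : ~` U k `&` F = set0.
  apply/seteqP; split => // x [nUx [Z nB]].
  have [i [ki ni Ui]] := phiI x (fun i ik => Z i ik).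
  case: (ltngtP k i) => [ki'||ik].
  - by exfalso; apply: nB; exists i.
  - by rewrite ltnNge ki.
  - by move: Ui; rewrite -ik.
have [fk [cfk fA fB fr]] := @urysohn_ext_itv X RR nX (~` U k) F 0 1 cUk cF dF ltr01.
have fA' : forall a, ~ U k a -> fk a = 0.
  by move=> a Ha; exact: (fA (fk a) (ex_intro2 _ _ a Ha erefl)).
have fB' : forall a, F a -> fk a = 1.
  by move=> a Ha; exact: (fB (fk a) (ex_intro2 _ _ a Ha erefl)).
have fr' : forall a, 0 <= fk a.
  move=> a; have := fr (fk a) (ex_intro2 _ _ a I erefl).
  by rewrite /= in_itv /= => /andP[].
exists (fun i => if i == k then fk else phi i); split.
- by move=> i; case: eqP.
- by move=> i x; case: eqP.
- move=> i x; rewrite ltnS leq_eqVlt; case: eqP => [-> _|_ /= ik].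
    by move=> H; apply: contrapT => nU; move: H; rewrite fA' // ltxx.
  exact: phiU.
- move=> x Z.
  have Z' : forall i, (i < k)%N -> phi i x = 0.
    move=> i ik; have := Z i (ltnW ik); case: eqP => // e.
    by move: ik; rewrite e ltnn.
  have fx : fk x = 0 by have := Z k (ltnSn k); rewrite eqxx.
  have nF : ~ F x by move=> Fx; move: fx; rewrite fB' //; apply/eqP; exact: oner_neq0.
  have : ~ ~ (\bigcup_(i in [set i | (k < i)%N /\ (i <= n)%N]) U i) x.
    by move=> H; apply: nF; split => // i ik; exact: Z'.
  move/contrapT => [i [ki ni] Ui]; by exists i.
Qed.

Lemma pu {X : topologicalType} (nX : normal_space X) (U : nat -> set X) (n : nat) :
  (forall i, (i <= n)%N -> open (U i)) ->
  (forall x, exists2 i, (i <= n)%N & U i x) ->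
  exists phi : nat -> X -> RR, [/\ forall i, continuous (phi i),
    forall i x, 0 <= phi i x,
    forall i x, (i <= n)%N -> 0 < phi i x -> U i x &
    forall x, exists2 i, (i <= n)%N & 0 < phi i x].
Proof.
move=> oU cU; have [phi [c0 p0 pU pI]] := pu_step nX oU cU (leqnn n.+1).
exists phi; split => // x; apply: contrapT => H.
have [i [ni ni' _]] : exists i, [/\ (n.+1 <= i)%N, (i <= n)%N & U i x].
  apply: pI => i ni; apply/eqP; rewrite eq_le p0 andbT leNgt; apply/negP => pos.
  by apply: H; exists i.
by move: (leq_trans ni ni'); rewrite ltnn.
Qed.

End PU.


Section Comb.
Local Open Scope ring_scope.
Notation RR := Rdefinitions.R.

Lemma ex_max n (f : 'I_n.+1 -> RR) : exists i, forall j, f j <= f i.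
Proof.
case: (@arg_maxP _ _ _ ord0 xpredT f isT) => i _ H; exists i => j; exact: H.
Qed.

Lemma open_ltf {X : topologicalType} (u v : X -> RR) :
  continuous u -> continuous v -> open [set x | u x < v x].
Proof.
move=> cu cv.
have -> : [set x | u x < v x] = (fun x => v x - u x) @^-1` [set r | 0 < r].
  by apply/seteqP; split => x /=; rewrite subr_gt0.
apply: open_comp; last exact: open_gt.
move=> x _; exact: (@continuousB _ RR^o X v u x (cv x) (cu x)).
Qed.

Lemma cont_mul {X : topologicalType} (u v : X -> RR) :
  continuous u -> continuous v -> continuous (fun x => u x * v x).
Proof. move=> cu cv x; apply: continuousM; [exact: cu | exact: cv]. Qed.

Definition pv {X : Type} n m (phi psi : nat -> X -> RR)
  (ab : 'I_n.+1 * 'I_m.+1) (x : X) : RR := phi ab.1 x * psi ab.2 x.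

Definition Wset {X : Type} n m (phi psi : nat -> X -> RR)
  (P : {set 'I_n.+1 * 'I_m.+1}) : set X :=
  [set x | (forall a b, a \in P -> b \notin P -> pv phi psi b x < pv phi psi a x) /\
           (forall a, a \in P -> 0 < pv phi psi a x)].

Lemma Wset_open {X : topologicalType} n m (phi psi : nat -> X -> RR)
  (P : {set 'I_n.+1 * 'I_m.+1}) :
  (forall i, continuous (phi i)) -> (forall j, continuous (psi j)) ->
  open (Wset phi psi P).
Proof.
move=> cphi cpsi; rewrite openE => x [H1 H2].
have cp : forall ab : 'I_n.+1 * 'I_m.+1, continuous (pv phi psi ab).
  by move=> ab; exact: (@cont_mul X (phi ab.1) (psi ab.2) (cphi _) (cpsi _)).
have N1 : \forall y \near x, forall ab : ('I_n.+1 * 'I_m.+1) * ('I_n.+1 * 'I_m.+1),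
    ab.1 \in P -> ab.2 \notin P -> pv phi psi ab.2 y < pv phi psi ab.1 y.
  apply: filter_forall => -[a b] /=.
  have [aP|aP] := boolP (a \in P); last by apply: nearW => y.
  have [bP|bP] := boolP (b \in P); first by apply: nearW => y.
  have : nbhs x [set y | pv phi psi b y < pv phi psi a y].
    apply: open_nbhs_nbhs; split; [exact: open_ltf | exact: H1].
  by apply: filterS => y ? _ _.
have N2 : \forall y \near x, forall a : 'I_n.+1 * 'I_m.+1,
    a \in P -> 0 < pv phi psi a y.
  apply: filter_forall => a.
  have [aP|aP] := boolP (a \in P); last by apply: nearW => y.
  have : nbhs x [set y | (fun _ => 0 : RR) y < pv phi psi a y].
    apply: open_nbhs_nbhs; split; last exact: H2.
    by apply: open_ltf => //; move=> z; exact: cvg_cst.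
  by apply: filterS => y ? _.
rewrite /interior /=; apply: filterS (filterI N1 N2) => y [Y1 Y2]; split.
  by move=> a b aP bP; exact: (Y1 (a, b)).
exact: Y2.
Qed.

Lemma Wset_inter {X : Type} n m (phi psi : nat -> X -> RR)
  (P Q : {set 'I_n.+1 * 'I_m.+1}) x :
  Wset phi psi P x -> Wset phi psi Q x -> (P \subset Q) \/ (Q \subset P).
Proof.
move=> [P1 _] [Q1 _]; case: (boolP (P \subset Q)) => [|/fintype.subsetPn [a aP aQ]].
  by left.
right; apply/fintype.subsetP => b bQ; apply: contraT => bP.
have h1 := P1 a b aP bP; have h2 := Q1 b a bQ aQ.
by have := lt_trans h1 h2; rewrite ltxx.
Qed.

Lemma rect_eq n m (S S' : {set 'I_n.+1}) (T T' : {set 'I_m.+1}) :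
  S != finset.set0 -> T != finset.set0 ->
  finset.setX S T \subset finset.setX S' T' ->
  (#|S| + #|T| = #|S'| + #|T'|)%N -> S = S' /\ T = T'.
Proof.
move=> /set0Pn [i iS] /set0Pn [j jT] sub e.
have SS : S \subset S'.
  apply/fintype.subsetP => a aS.
  have : (a, j) \in finset.setX S' T'.
    by apply: (fintype.subsetP sub); rewrite finset.in_setX aS jT.
  by rewrite finset.in_setX => /andP[].
have TT : T \subset T'.
  apply/fintype.subsetP => b bT.
  have : (i, b) \in finset.setX S' T'.
    by apply: (fintype.subsetP sub); rewrite finset.in_setX iS bT.
  by rewrite finset.in_setX => /andP[].
have h1 := subset_leq_card SS; have h2 := subset_leq_card TT.
have e1 : #|S| = #|S'| by lia.
have e2 : #|T| = #|T'| by lia.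
by split; apply/eqP; rewrite eqEcard ?SS ?TT ?e1 ?e2 /=.
Qed.

End Comb.


Section Main.
Local Open Scope ring_scope.
Notation RR := Rdefinitions.R.

Lemma comb {X Y Z : topologicalType} (f g : X -> Y) (f' g' : Y -> Z) n m :
  normal_space X -> continuous f -> continuous g -> continuous f' -> continuous g' ->
  hdist_le f g n -> hdist_le f' g' m -> hdist_le (f' \o f) (g' \o g) (n + m).
Proof.
move=> nX cf cg cf' cg' [U [oU [cU hU]]] [V [oV [cV hV]]].
pose V' := fun j => f @^-1` V j.
have oV' : forall j, (j <= m)%N -> open (V' j).
  by move=> j jm; apply: open_comp; [move=> x _; exact: cf | exact: oV].
have cV' : forall x, exists2 j, (j <= m)%N & V' j x by move=> x; exact: cV (f x).
have [phi [cphi phi0 phiU phiC]] := pu nX oU cU.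
have [psi [cpsi psi0 psiV psiC]] := pu nX oV' cV'.
pose D k := [set ST : {set 'I_n.+1} * {set 'I_m.+1} | [/\ ST.1 != finset.set0,
   ST.2 != finset.set0 & (#|ST.1| + #|ST.2| = k.+2)%N]].
pose Q (ST : {set 'I_n.+1} * {set 'I_m.+1}) :=
  Wset phi psi (finset.setX ST.1 ST.2).
exists (fun k => \bigcup_(ST in D k) Q ST); split; [|split].
- move=> k _; apply: bigcup_open => ST _; exact: Wset_open.
- move=> x.
  have [i0 Mi] := ex_max (fun i : 'I_n.+1 => phi i x).
  have [j0 Nj] := ex_max (fun j : 'I_m.+1 => psi j x).
  have Mpos : 0 < phi i0 x.
    have [i ni pi] := phiC x; rewrite -ltnS in ni.
    exact: (lt_le_trans pi (Mi (Ordinal ni))).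
  have Npos : 0 < psi j0 x.
    have [j nj pj] := psiC x; rewrite -ltnS in nj.
    exact: (lt_le_trans pj (Nj (Ordinal nj))).
  pose Sx := finset (fun i : 'I_n.+1 => phi i x == phi i0 x).
  pose Tx := finset (fun j : 'I_m.+1 => psi j x == psi j0 x).
  have iS : i0 \in Sx by rewrite finset.in_set eqxx.
  have jT : j0 \in Tx by rewrite finset.in_set eqxx.
  have cS1 : (0 < #|Sx|)%N by apply/card_gt0P; exists i0.
  have cT1 : (0 < #|Tx|)%N by apply/card_gt0P; exists j0.
  have cS2 : (#|Sx| <= n.+1)%N by have := max_card Sx; rewrite card_ord.
  have cT2 : (#|Tx| <= m.+1)%N by have := max_card Tx; rewrite card_ord.
  exists (#|Sx| + #|Tx| - 2)%N. by lia.
  exists (Sx, Tx).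
    split => /=; [by apply/set0Pn; exists i0 | by apply/set0Pn; exists j0 | by rewrite -addn2 subnK //; exact: (leq_add cS1 cT1)].
  split.
  + move=> [a1 a2] [b1 b2]; rewrite !finset.in_setX !finset.in_set /=.
    move=> /andP[/eqP ea /eqP eb] nb.
    rewrite /pv /= ea eb.
    have hb1 := Mi b1; have hb2 := Nj b2.
    have hp1 := phi0 b1 x; have hp2 := psi0 b2 x.
    case/nandP: nb => /eqP nb.
    * have lt1 : phi b1 x < phi i0 x by rewrite lt_neqAle; apply/andP; split => //; apply/eqP.
      nra.
    * have lt2 : psi b2 x < psi j0 x by rewrite lt_neqAle; apply/andP; split => //; apply/eqP.
      nra.
  + move=> [a1 a2]; rewrite finset.in_setX !finset.in_set /= => /andP[/eqP ea /eqP eb].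
    by rewrite /pv /= ea eb; exact: mulr_gt0.
- move=> k _; apply: hom_glue.
  + move=> ST _; exact: Wset_open.
  + move=> [S T] [S' T'] x /= [S0 T0 cST] [S0' T0' cST'] Qx Q'x.
    case: (Wset_inter Qx Q'x) => sub.
      by case: (rect_eq S0 T0 sub (etrans cST (esym cST'))) => /= -> ->.
    by case: (rect_eq S0' T0' sub (etrans cST' (esym cST))) => /= -> ->.
  + move=> [S T] /= [S0 T0 _].
    have /set0Pn [i iS] := S0; have /set0Pn [j jT] := T0.
    have sub : Q (S, T) `<=` U i `&` V' j.
      move=> x [_ Hp]; have := Hp (i, j); rewrite finset.in_setX iS jT /pv /= => /(_ isT) pos.
      have p1 := phi0 i x; have p2 := psi0 j x.
      have q1 : 0 < phi i x by nra.
      have q2 : 0 < psi j x by nra.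
      split; [apply: phiU q1 | apply: psiV q2]; by rewrite -ltnS.
    apply: (@hom_trans _ _ _ _ (g' \o f)).
      apply: (hom_sub (U := f @^-1` V j)); first by move=> x /sub [].
      by apply: hom_pre => //; apply: hV; rewrite -ltnS.
    apply: (hom_sub (U := U i)); first by move=> x /sub [].
    by apply: hom_post => //; apply: hU; rewrite -ltnS.
Qed.

End Main.

Local Open Scope ereal_scope.

Lemma hdist_attained {X Y : topologicalType} (f g : X -> Y) n :
  hdist_le f g n -> exists k, hdist_le f g k /\
     hdist f g = ((k%:R)%R : Rdefinitions.R)%:E.
Proof.
move=> H.
have ex : exists k, `[< hdist_le f g k >] by exists n; apply/asboolP.
case: (ex_minnP ex) => k /asboolP Hk kmin.
exists k; split => //.
apply/eqP; rewrite eq_le; apply/andP; split.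
- by apply: ereal_inf_lbound; exists k.
- apply: le_ereal_inf_tmp => _ [j Hj <-]; rewrite lee_fin ler_nat.
  by apply: kmin; exact/asboolP.
Qed.

Lemma hdist_ge0 {X Y : topologicalType} (f g : X -> Y) : 0 <= hdist f g.
Proof.
by apply: le_ereal_inf_tmp => _ [j Hj <-]; rewrite lee_fin ler0n.
Qed.

Lemma hdist_neqNy {X Y : topologicalType} (f g : X -> Y) : hdist f g != -oo.
Proof. by rewrite -ltNye (lt_le_trans ltNy0 (hdist_ge0 f g)). Qed.

Lemma hdist_oo {X Y : topologicalType} (f g : X -> Y) :
  ~ (exists n, hdist_le f g n) -> hdist f g = +oo.
Proof.
move=> N; apply/ereal_inf_pinfty => y [k Hk _].
by exfalso; apply: N; exists k.
Qed.

Unset Implicit Arguments.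

Theorem proposition3p19 (X Y Z : topologicalType) (f g : X -> Y) (f' g' : Y -> Z) :
  normal_space X ->
  continuous f -> continuous g -> continuous f' -> continuous g' ->
  hdist (f' \o f) (g' \o g) <= hdist f g + hdist f' g'.
Proof.
move=> nX cf cg cf' cg'.
have [[n Hn]|N1] := pselect (exists n, hdist_le f g n); last first.
  by rewrite (hdist_oo N1) addye ?leey // hdist_neqNy.
have [[m Hm]|N2] := pselect (exists m, hdist_le f' g' m); last first.
  by rewrite (hdist_oo N2) addey ?leey // hdist_neqNy.
have [k [Hk ->]] := hdist_attained Hn.
have [l [Hl ->]] := hdist_attained Hm.
have H := comb nX cf cg cf' cg' Hk Hl.
apply: ereal_inf_lbound; exists (k + l)%N => //.
by rewrite natrD EFinD.
Qed.
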